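(* Let $\mathcal{G}$ be a connected simple undirected graph on $N$ nodes with Laplacian $L\in\mathbb{R}^{N\times N}$. Consider the system $\dot x(t)=u(t)$, $x(0)=x_0\in\mathbb{R}^N$, and the cost functional $$J(x_0,u)=\int_0^\infty x^\top(t)Qx(t)+u^\top(t)Ru(t)\,dt,$$ where $Q\in\mathbb{R}^{N\times N}$ is symmetric with $Q\ge 0$ and $R\in\mathbb{R}^{N\times N}$ is symmetric with $R>0$. Suppose that $J(x_0,u)<\infty$ for all $x_0\in\mathbb{R}^N$ and all control laws of the form $u=-gLx$ with $g>0$. Then there exists a symmetric positive semi-definite matrix $W\in\mathbb{R}^{N\times N}$ such that $Q=LWL$.
   Context: For a graph with node set $\{1,\dots,N\}$, the adjacency matrix is $A=[a_{ij}]$ with $a_{ij}=1$ if $(j,i)$ is an edge and $a_{ij}=0$ otherwise; the degree matrix is $D=\mathrm{diag}(d_1,\dots,d_N)$ with $d_i=\sum_j a_{ij}$; the Laplacian is $L=D-A$. The graph is simple (no self-loops), undirected (so $L$ is symmetric) and connected. *)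

(* Defs.v *)
(* Vectors in R^N are functions nat -> R (only indices < N matter);
   N x N matrices are functions nat -> nat -> R (only indices < N matter). *)
From Stdlib Require Import Reals Relations.
Open Scope R_scope.

Definition vec := nat -> R.
Definition mat := nat -> nat -> R.

Fixpoint sumN (n : nat) (f : nat -> R) : R :=
  match n with
  | O => 0
  | S m => sumN m f + f m
  end.

Definition mulmv (N : nat) (A : mat) (v : vec) : vec :=
  fun i => sumN N (fun j => A i j * v j).

Definition mulmm (N : nat) (A B : mat) : mat :=
  fun i j => sumN N (fun k => A i k * B k j).

Definition quad (N : nat) (A : mat) (v : vec) : R :=
  sumN N (fun i => sumN N (fun j => v i * A i j * v j)).

Definition symmetric_mat (N : nat) (A : mat) : Prop :=
  forall i j, (i < N)%nat -> (j < N)%nat -> A i j = A j i.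

Definition psd (N : nat) (A : mat) : Prop :=
  symmetric_mat N A /\ forall v : vec, 0 <= quad N A v.

Definition nonzero_vec (N : nat) (v : vec) : Prop :=
  exists i, (i < N)%nat /\ v i <> 0.

Definition pd (N : nat) (A : mat) : Prop :=
  symmetric_mat N A /\ forall v : vec, nonzero_vec N v -> 0 < quad N A v.

Definition simple_undirected (N : nat) (adj : nat -> nat -> bool) : Prop :=
  (forall i, (i < N)%nat -> adj i i = false) /\
  (forall i j, (i < N)%nat -> (j < N)%nat -> adj i j = adj j i).

Definition edge_in (N : nat) (adj : nat -> nat -> bool) (i j : nat) : Prop :=
  (i < N)%nat /\ (j < N)%nat /\ adj i j = true.

Definition connected (N : nat) (adj : nat -> nat -> bool) : Prop :=
  forall i j, (i < N)%nat -> (j < N)%nat ->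
    clos_refl_trans nat (edge_in N adj) i j.

Definition adjmat (adj : nat -> nat -> bool) : mat :=
  fun i j => if adj j i then 1 else 0.

Definition degree (N : nat) (adj : nat -> nat -> bool) (i : nat) : R :=
  sumN N (fun j => adjmat adj i j).

Definition laplacian (N : nat) (adj : nat -> nat -> bool) : mat :=
  fun i j => (if Nat.eqb i j then degree N adj i else 0) - adjmat adj i j.

Definition closed_loop_traj (N : nat) (L : mat) (g : R) (x0 : vec)
  (x : R -> vec) : Prop :=
  (forall i, (i < N)%nat -> x 0 i = x0 i) /\
  (forall i t, (i < N)%nat ->
     derivable_pt_lim (fun s => x s i) t (- g * mulmv N L (x t) i)).

Definition improper_integral_finite (f : R -> R) : Prop :=
  exists l : R, forall eps : R, eps > 0 ->
    exists T0 : R, forall (T : R) (pr : Riemann_integrable f 0 T),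
      T0 <= T -> Rabs (RiemannInt pr - l) < eps.

Definition cost_finite (N : nat) (Q Rm L : mat) (g : R) (x : R -> vec) : Prop :=
  improper_integral_finite
    (fun t => quad N Q (x t) + quad N Rm (fun i => - g * mulmv N L (x t) i)).

(* Main.v *)
Require Import Defs.
From Stdlib Require Import Reals Lra Relations Lia.
Open Scope R_scope.

Lemma const_int_zero c : improper_integral_finite (fun _ => c) -> c = 0.
Proof.
  intros [l Hl]. destruct (Req_dec c 0) as [|Hc]; auto. exfalso.
  destruct (Hl (1/2)) as [T0 HT]; [lra|].
  set (T1 := Rmax T0 0).
  assert (Ha : Rabs c > 0) by (apply Rabs_pos_lt; auto).
  set (T2 := T1 + 2 / Rabs c).
  assert (H1 := HT T1 (RiemannInt_P14 0 T1 c) (Rmax_l _ _)).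
  assert (H2 : T0 <= T2).
  { unfold T2. assert (0 < 2 / Rabs c) by (apply Rdiv_lt_0_compat; lra).
    pose proof (Rmax_l T0 0). fold T1 in H0. lra. }
  assert (H3 := HT T2 (RiemannInt_P14 0 T2 c) H2).
  pose proof (RiemannInt_P15 (RiemannInt_P14 0 T1 c)) as E1. pose proof (RiemannInt_P15 (RiemannInt_P14 0 T2 c)) as E3. unfold fct_cte in *. rewrite E1 in H1. rewrite E3 in H3.
  assert (E : c * (T2 - 0) - l - (c * (T1 - 0) - l) = c * (2 / Rabs c)) by (unfold T2; ring).
  assert (Rabs (c * (2 / Rabs c)) = 2).
  { rewrite Rabs_mult. unfold Rdiv. rewrite Rabs_mult, Rabs_inv, (Rabs_pos_eq (Rabs c)) by apply Rabs_pos.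
    rewrite (Rabs_right 2) by lra. field. lra. }
  pose proof (Rabs_triang (c * (T2 - 0) - l) (- (c * (T1 - 0) - l))).
  rewrite Rabs_Ropp in H0. replace (c * (T2 - 0) - l + - (c * (T1 - 0) - l)) with (c * (2 / Rabs c)) in H0 by (unfold T2; ring). lra.
Qed.

Lemma scal_aux (a c : R) : 0 <= c -> (forall s, 0 <= s*a + s*a + s*s*c) -> a = 0.
Proof.
  intros Hc Hs.
  set (s := - a / (c + 1)).
  assert (E : s * (c + 1) = - a) by (unfold s; field; lra).
  specialize (Hs s).
  assert (H2 : 0 <= (c+1)*(c+1) * (s*a + s*a + s*s*c)).
  { apply Rmult_le_pos; [nra|exact Hs]. }
  assert (H3 : (c+1)*(c+1) * (s*a + s*a + s*s*c) = - (a*a) * (c + 2)).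
  { replace ((c+1)*(c+1) * (s*a + s*a + s*s*c)) with
      ((s*(c+1)) * a * (c+1) + (s*(c+1)) * a * (c+1) + (s*(c+1))*(s*(c+1))*c) by ring.
    rewrite E. ring. }
  nra.
Qed.

From mathcomp Require Import all_boot all_order all_algebra.
From mathcomp Require Import Rstruct.
Import Order.TTheory GRing.Theory Num.Theory.
Set Implicit Arguments. Unset Strict Implicit.
Local Open Scope ring_scope.
Lemma sumN_big N f : sumN N f = \sum_(i < N) f i.
Proof. elim: N => [|N IH] /=; first by rewrite big_ord0. by rewrite big_ord_recr /= IH. Qed.
Definition mx n (A : mat) : 'M[R]_n := \matrix_(i < n, j < n) A i j.
Definition cv n (v : vec) : 'cV[R]_n := \col_(i < n) v i.
Definition qf n (A : 'M[R]_n) (u : 'cV[R]_n) : R := (u^T *m A *m u) 0 0.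
Lemma quad_qf n A v : quad n A v = qf (mx n A) (cv n v).
Proof.
rewrite /quad /qf sumN_big mxE.
under eq_bigr do rewrite sumN_big.
under [RHS]eq_bigr => j _ do (rewrite !mxE; under eq_bigr => k _ do rewrite !mxE).
under [RHS]eq_bigr => j _ do rewrite mulr_suml.
rewrite [RHS]exchange_big /=; apply: eq_bigr => i _; apply: eq_bigr => j _.
by [].
Qed.

Lemma mx_mulmm n A B : mx n (mulmm n A B) = mx n A *m mx n B.
Proof.
apply/matrixP => i j; rewrite !mxE /mulmm sumN_big; apply: eq_bigr => k _.
by rewrite !mxE.
Qed.

Definition ones n : 'cV[R]_n := const_mx 1.

Lemma lap_row n adj (v : 'cV[R]_n) i :
  (mx n (laplacian n adj) *m v) i 0 =
  \sum_(j < n) adjmat adj i j * (v i 0 - v j 0).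
Proof.
rewrite mxE.
under eq_bigr do rewrite mxE /laplacian mulrBl.
under [RHS]eq_bigr do rewrite mulrBr.
rewrite !sumrB; congr (_ - _).
rewrite (bigD1 i) //= big1 ?addr0; last first.
  move=> j /eqP Hji.
  have -> : Nat.eqb i j = false by apply/Nat.eqb_neq => /ord_inj /esym.
  by rewrite mul0r.
rewrite Nat.eqb_refl /degree sumN_big -mulr_suml.
by [].
Qed.

Lemma lap_ones n adj : mx n (laplacian n adj) *m ones n = 0.
Proof.
apply/matrixP => i j; rewrite (ord1 j) lap_row [RHS]mxE big1 // => k _.
by rewrite !mxE subrr mulr0.
Qed.

Lemma lap_sym n adj : simple_undirected n adj ->
  (mx n (laplacian n adj))^T = mx n (laplacian n adj).
Proof.
move=> [_ Hsym]; apply/matrixP => i j; rewrite !mxE /laplacian /adjmat.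
rewrite (Hsym i j (ssrnat.ltP (ltn_ord i)) (ssrnat.ltP (ltn_ord j))).
case: (Nat.eqb_spec j i) => [/ord_inj ->|Hji]; first by rewrite Nat.eqb_refl.
by have -> : Nat.eqb i j = false by apply/Nat.eqb_neq => E; apply: Hji; rewrite E.

Qed.

Lemma lap_ker n adj : simple_undirected n.+1 adj -> connected n.+1 adj ->
  forall v : 'cV[R]_n.+1, mx n.+1 (laplacian n.+1 adj) *m v = 0 ->
  exists c, forall i, v i 0 = c.
Proof.
move=> Hs Hc v Hv.
set F := fun i => v i 0.
case: (@arg_maxP _ _ _ ord0 predT F erefl) => i0 _ Hmax.
exists (F i0).
have Hstep : forall x y : 'I_n.+1, adj x y -> F x = F i0 -> F y = F i0.
  move=> x y Hxy Hx.
  have := lap_row adj v x; rewrite Hv mxE => /esym H0.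
  have Hnn : forall j : 'I_n.+1, true -> 0 <= adjmat adj x j * (v x 0 - v j 0).
    move=> j _; apply: mulr_ge0; first by rewrite /adjmat; case: (adj j x).
    by rewrite subr_ge0; have := Hmax j erefl; rewrite -/(F x) Hx.
  have := psumr_eq0P Hnn H0 (i:=y) erefl.
  have -> : adjmat adj x y = 1.
    by rewrite /adjmat (proj2 Hs y x) ?Hxy //; apply/ssrnat.ltP.
  by rewrite mul1r => /eqP; rewrite subr_eq0 => /eqP; rewrite -/(F x) -/(F y) Hx.
move=> k.
have Hc' := Hc i0 k (ssrnat.ltP (ltn_ord _)) (ssrnat.ltP (ltn_ord _)).
apply clos_rt_rt1n in Hc'.
suff : forall a b, clos_refl_trans_1n nat (edge_in n.+1 adj) a b ->
   (a < n.+1)%N -> F (inord a) = F i0 -> F (inord b) = F i0.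
  by move=> /(_ _ _ Hc' (ltn_ord i0)); rewrite !inord_val; apply.
move=> a b; elim => {a b Hc'} [a|a b c Hab _ IH] Ha Fa //.
case: Hab => _ [/ssrnat.ltP Hb Hadj].
apply: IH => //; apply: (Hstep (inord a)) => //.
by rewrite !inordK.
Qed.

Lemma main_alg n (Lm Qm : 'M[R]_n.+1) :
  Lm^T = Lm -> Lm *m ones n.+1 = 0 ->
  (forall v : 'cV[R]_n.+1, Lm *m v = 0 -> exists c, forall i, v i 0 = c) ->
  Qm^T = Qm -> Qm *m ones n.+1 = 0 -> (forall u, 0 <= qf Qm u) ->
  exists Wm : 'M[R]_n.+1, Wm^T = Wm /\ (forall u, 0 <= qf Wm u) /\
     Lm *m Wm *m Lm = Qm.
Proof.
move=> HLs HL1 Hker HQs HQ1 HQp.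
set N := n.+1.
set o := ones N.
have Hnz : (N%:R : R) != 0 by rewrite pnatr_eq0.
set J := o *m ((N%:R)^-1 *: o^T).
have Hoo : o^T *m o = (N%:R : R)%:M.
  apply/matrixP => i j; rewrite (ord1 i) (ord1 j) !mxE /=.
  under eq_bigr do rewrite !mxE mulr1.
  by rewrite sumr_const card_ord.
have HJ1 : J *m o = o.
  by rewrite /J -mulmxA -scalemxAl Hoo scale_scalar_mx mulVf // mulmx1.
have HJl : forall X, o^T *m X = o^T -> J *m X = J.
  by move=> X HX; rewrite /J -mulmxA -scalemxAl HX.
have HJr : forall X, X *m o = o -> X *m J = J.
  by move=> X HX; rewrite /J mulmxA HX.
have HJs : J^T = J.
  by rewrite /J trmx_mul linearZ /= trmxK -scalemxAl scalemxAr.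
have HoJ : o^T *m J = o^T.
  by rewrite -[o^T *m J]trmxK trmx_mul HJs trmxK HJ1.
have HoL : o^T *m Lm = 0.
  by rewrite -[o^T *m Lm]trmxK trmx_mul HLs trmxK HL1 trmx0.
set A := Lm + J.
have HAs : A^T = A by rewrite /A linearD /= HLs HJs.
have HoA : o^T *m A = o^T by rewrite /A mulmxDr HoL add0r HoJ.
have HA1 : A *m o = o by rewrite /A mulmxDl HL1 add0r HJ1.
have HAker : forall v : 'cV[R]_N, A *m v = 0 -> v = 0.
  move=> v Hv.
  have Hov : o^T *m v = 0 by rewrite -HoA -mulmxA Hv mulmx0.
  have HJv : J *m v = 0 by rewrite /J -mulmxA -scalemxAl Hov scaler0 mulmx0.
  have HLv : Lm *m v = 0.
    by move: Hv; rewrite /A mulmxDl HJv addr0.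
  case: (Hker v HLv) => c Hc.
  have : (o^T *m v) 0 0 = 0 by rewrite Hov mxE.
  rewrite mxE.
  under eq_bigr do rewrite !mxE Hc mul1r.
  rewrite sumr_const card_ord -mulr_natr => /eqP; rewrite mulf_eq0 (negbTE Hnz) orbF => /eqP c0.
  by apply/matrixP => i j; rewrite (ord1 j) Hc c0 mxE.
have HAu : A \in unitmx.
  rewrite -row_free_unit -kermx_eq0; apply/eqP/row_matrixP => i.
  rewrite row0.
  have Hr : row i (kermx A) *m A = 0 by apply/sub_kermxP; exact: row_sub.
  have : A *m (row i (kermx A))^T = 0 by rewrite -{1}HAs -trmx_mul Hr trmx0.
  by move/HAker => H; rewrite -[row _ _]trmxK H trmx0.
set M := invmx A.
have HAM : A *m M = 1%:M by apply: mulmxV.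
have HMA : M *m A = 1%:M by apply: mulVmx.
have HMs : M^T = M by rewrite /M trmx_inv HAs.
have HoM : o^T *m M = o^T by rewrite -{1}HoA -mulmxA HAM mulmx1.
have HMo : M *m o = o by rewrite -{1}HA1 mulmxA HMA mul1mx.
have HLM : Lm *m M = 1%:M - J.
  have -> : Lm = A - J by rewrite /A addrK.
  by rewrite mulmxBl HAM HJl.
have HML : M *m Lm = 1%:M - J.
  have -> : Lm = A - J by rewrite /A addrK.
  by rewrite mulmxBr HMA HJr.
have HQJ : Qm *m J = 0 by rewrite /J mulmxA HQ1 mul0mx.
have HoQ : o^T *m Qm = 0.
  by rewrite -[o^T *m Qm]trmxK trmx_mul HQs trmxK HQ1 trmx0.
have HJQ : J *m Qm = 0 by rewrite /J -mulmxA -scalemxAl HoQ scaler0 mulmx0.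
exists (M *m Qm *m M); split; [|split].
- by rewrite !trmx_mul HMs HQs mulmxA.
- move=> u; rewrite /qf.
  have -> : u^T *m (M *m Qm *m M) *m u = (M *m u)^T *m Qm *m (M *m u).
    by rewrite trmx_mul HMs !mulmxA.
  exact: HQp.
- rewrite -!mulmxA HML !mulmxA HLM mulmxBl mul1mx HJQ subr0 mulmxBr mulmx1 HQJ.
  by rewrite subr0.
Qed.

Lemma e00D (A B : 'M[R]_1) : (A + B) 0 0 = A 0 0 + B 0 0. Proof. by rewrite mxE. Qed.
Lemma e00Z a (A : 'M[R]_1) : (a *: A) 0 0 = a * A 0 0. Proof. by rewrite mxE. Qed.

Lemma psd_null n (Q : 'M[R]_n) (u : 'cV[R]_n) :
  Q^T = Q -> (forall w, 0 <= qf Q w) -> qf Q u = 0 -> Q *m u = 0.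
Proof.
move=> HQs Hp Hu.
set w := Q *m u.
set b := fun x y : 'cV[R]_n => (x^T *m Q *m y) 0 0.
have Hb : forall x y, b x y = b y x.
  move=> x y; rewrite /b -[in RHS]HQs.
  have -> : (y^T *m Q^T *m x) = (x^T *m Q *m y)^T by rewrite !trmx_mul trmxK mulmxA.
  by rewrite [RHS]mxE.
have Hwu : b w u = (w^T *m w) 0 0 by rewrite /b -mulmxA.
have Hexp : forall s, qf Q (u + s *: w) = qf Q u + s * b u w + s * b w u + s * s * qf Q w.
  move=> s; rewrite /qf /b [(u + _)^T]linearD /= [(s *: w)^T]linearZ /= !mulmxDl !mulmxDr.
  rewrite -!scalemxAr -!scalemxAl -?scalemxAr ?scalerA !e00D !e00Z.
  by rewrite !addrA; congr (_ + _ + _ + _).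
have Hsq : (w^T *m w) 0 0 = 0.
  apply: (@scal_aux _ (qf Q w)); first by apply/RleP; exact: Hp.
  move=> s; apply/RleP.
  have := Hp (u + s *: w); rewrite Hexp Hu add0r -(Hb w u) Hwu.
  by [].
have Hsq' : \sum_i (w i 0) ^+ 2 = 0.
  rewrite -[RHS]Hsq [RHS]mxE; apply: eq_bigr => i _.
  by rewrite expr2 [w^T 0 i]mxE.
apply/matrixP => i j; rewrite (ord1 j) [RHS]mxE.
apply/eqP; rewrite -sqrf_eq0; apply/eqP.
apply: (psumr_eq0P _ Hsq') => // k _; exact: sqr_ge0.
Qed.


Lemma mulmv_mx n A v i : (i < n.+1)%N ->
  mulmv n.+1 A v i = (mx n.+1 A *m cv n.+1 v) (inord i) 0.
Proof.
move=> Hi; rewrite /mulmv sumN_big mxE; apply: eq_bigr => k _.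
by rewrite !mxE inordK.
Qed.

Lemma cv_ones n : cv n (fun _ => 1%R) = ones n.
Proof. by apply/matrixP => i j; rewrite !mxE. Qed.

Lemma qf0 n (A : 'M[R]_n) : qf A 0 = 0.
Proof. by rewrite /qf mulmx0 mxE. Qed.

Close Scope ring_scope.
Open Scope R_scope.

Theorem lemma1 (N : nat) (adj : nat -> nat -> bool) (Q Rm : mat)
  (Hsimple : simple_undirected N adj)
  (Hconn : connected N adj)
  (HQ : psd N Q)
  (HR : pd N Rm)
  (Hfin : forall (g : R) (x0 : vec) (x : R -> vec),
      0 < g -> closed_loop_traj N (laplacian N adj) g x0 x ->
      cost_finite N Q Rm (laplacian N adj) g x) :
  exists W : mat, psd N W /\
    forall i j, (i < N)%coq_nat -> (j < N)%coq_nat ->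
      Q i j = mulmm N (mulmm N (laplacian N adj) W) (laplacian N adj) i j.
Proof.
destruct N as [|n].
{ exists (fun _ _ => 0). split; [split|].
  - intros i j Hi; lia.
  - intros v; unfold quad; simpl; lra.
  - intros i j Hi; lia. }
set (L := laplacian n.+1 adj).
assert (Hone : forall i, (i < n.+1)%coq_nat -> mulmv n.+1 L (fun _ => 1) i = 0).
{ intros i Hi. rewrite mulmv_mx; last by apply/ssrnat.ltP.
  by rewrite cv_ones lap_ones mxE. }
assert (Htraj : closed_loop_traj n.+1 L 1 (fun _ => 1) (fun _ _ => 1)).
{ split; intros; [reflexivity|]. rewrite Hone // Rmult_0_r. apply derivable_pt_lim_const. }
have Hc := @const_int_zero _ (Hfin 1 _ _ Rlt_0_1 Htraj).
assert (HR0 : quad n.+1 Rm (fun i => - 1 * mulmv n.+1 L (fun _ => 1) i) = 0).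
{ rewrite quad_qf.
  have -> : cv n.+1 (fun i => - 1 * mulmv n.+1 L (fun _ => 1) i) = 0%R.
    apply/matrixP => i j; rewrite !mxE Hone; last by apply/ssrnat.ltP.
    by rewrite Rmult_0_r.
  exact: qf0. }
rewrite HR0 Rplus_0_r in Hc.
set (Qm := mx n.+1 Q). set (Lm := mx n.+1 L).
have HQs : Qm^T%R = Qm.
  apply/matrixP => i j; rewrite !mxE; apply: (proj1 HQ); apply/ssrnat.ltP; exact: ltn_ord.
have HQp : forall u, (0 <= qf Qm u)%R.
  move=> u; have := proj2 HQ (fun k => u (inord k) 0%R); rewrite quad_qf.
  have -> : cv n.+1 (fun k => u (inord k) 0%R) = u.
    by apply/matrixP => i j; rewrite !mxE inord_val (ord1 j).
  by move/RleP.
have HQ1 : (Qm *m ones n.+1 = 0)%R.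
  apply: psd_null => //; by rewrite /Qm -cv_ones -quad_qf.
have HLs : Lm^T%R = Lm by apply: lap_sym.
have [Wm [HWs [HWp HLWL]]] := main_alg HLs (lap_ones n.+1 adj) (lap_ker Hsimple Hconn) HQs HQ1 HQp.
exists (fun i j => Wm (inord i) (inord j)).
have HmxW : mx n.+1 (fun i j => Wm (inord i) (inord j)) = Wm.
  by apply/matrixP => i j; rewrite !mxE !inord_val.
split; [split|].
- intros i j Hi Hj.
  have := congr1 (fun M : 'M[R]_n.+1 => M (inord i) (inord j)) HWs.
  by rewrite /= mxE => ->.
- intros v. rewrite quad_qf HmxW; apply/RleP; exact: HWp.
- intros i j Hi Hj.
  have Hi' : (i < n.+1)%N by apply/ssrnat.ltP.
  have Hj' : (j < n.+1)%N by apply/ssrnat.ltP.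
  transitivity (Qm (inord i) (inord j)); first by rewrite /Qm mxE !inordK.
  rewrite -HLWL -[in LHS]HmxW -!mx_mulmm mxE !inordK //.
Qed.
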